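(* Let $G$ and $H$ be finite graphs. Then \[ n(G)\,\gamma(H)-m(G)\;\le\; \gamma_{\rm S}(G,H)\;\le\; \Gamma_{\rm S}(G,H)\;\le\; n(G)\,\gamma(H), \] where $n(G)=|V(G)|$ and $m(G)=|E(G)|$.
   Context: All graphs are finite and simple; $\gamma(X)$ denotes the domination number of a graph $X$ (the minimum size of a set $S$ of vertices such that every vertex is in $S$ or adjacent to a vertex of $S$). For graphs $G,H$ and a function $f\colon V(G)\to V(H)$, the Sierpiński product $G\otimes_f H$ is the graph with vertex set $V(G)\times V(H)$ and edges of two types: (type 1) $(g,h)(g,h')$ for every $g\in V(G)$ and every edge $hh'\in E(H)$; (type 2) $(g,f(g'))(g',f(g))$ for every edge $gg'\in E(G)$. The Sierpiński domination number is $\gamma_{\rm S}(G,H)=\min_{f}\gamma(G\otimes_f H)$ and the upper Sierpiński domination number is $\Gamma_{\rm S}(G,H)=\max_{f}\gamma(G\otimes_f H)$, where $f$ ranges over all functions $V(G)\to V(H)$. *)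

(* Defs.v *)
From mathcomp Require Import all_boot.
Set Implicit Arguments. Unset Strict Implicit. Unset Printing Implicit Defensive.

Definition simple_graph (T : finType) (e : rel T) : Prop :=
  symmetric e /\ irreflexive e.

(* n(G) = |V(G)| is #|T|; m(G) = number of (unordered) edges *)
Definition edge_set (T : finType) (e : rel T) : {set {set T}} :=
  [set E : {set T} | [exists x, exists y, e x y && (E == [set x; y])]].

Definition num_edges (T : finType) (e : rel T) : nat := #|edge_set e|.

Definition dominating (T : finType) (e : rel T) (S : {set T}) : bool :=
  [forall v, (v \in S) || [exists u in S, e u v]].

(* domination number: minimum size of a dominating set (setT is always
   dominating, so the default #|T| is attained and this is the true minimum) *)
Definition domination_number (T : finType) (e : rel T) : nat :=
  \big[minn/#|T|]_(S : {set T} | dominating e S) #|S|.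

Definition sierpinski_rel (TG TH : finType) (eG : rel TG) (eH : rel TH)
    (f : TG -> TH) : rel (TG * TH) :=
  fun x y => ((x.1 == y.1) && eH x.2 y.2)
          || [&& eG x.1 y.1, x.2 == f y.1 & y.2 == f x.1].

(* The fold default n(G)*n(H) is an
   upper bound on every term (gamma <= number of vertices), so when the set of
   functions f is nonempty (V(H) nonempty) this is exactly the minimum. *)
Definition sierpinski_domination (TG TH : finType) (eG : rel TG) (eH : rel TH)
  : nat :=
  \big[minn/#|TG| * #|TH|]_(f : {ffun TG -> TH})
     domination_number (sierpinski_rel eG eH f).

Definition upper_sierpinski_domination (TG TH : finType) (eG : rel TG)
  (eH : rel TH) : nat :=
  \max_(f : {ffun TG -> TH}) domination_number (sierpinski_rel eG eH f).

(* Main.v *)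
Require Import Defs.
From mathcomp Require Import all_boot.
Set Implicit Arguments. Unset Strict Implicit.

Lemma bigmin_le (I: finType) (P : pred I) (F: I->nat) d j : P j -> \big[minn/d]_(i | P i) F i <= F j.
Proof.
move=> Pj; have : j \in index_enum I by rewrite mem_index_enum.
elim: (index_enum I) => [//|a s IH]; rewrite inE big_cons.
case/orP=> [/eqP <-|/IH h]; first by rewrite Pj geq_minl.
case: (P a) => //; exact: leq_trans (geq_minr _ _) h.
Qed.

Lemma dom_le (T : finType) (e : rel T) S : dominating e S -> domination_number e <= #|S|.
Proof. by move=> hS; apply: bigmin_le. Qed.

Lemma dom_ex (T : finType) (e : rel T) :
  exists S, dominating e S /\ #|S| = domination_number e.
Proof.
rewrite /domination_number.
apply: (big_ind (fun n => exists S, dominating e S /\ #|S| = n)).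
- exists setT; split; last by rewrite cardsT.
  by apply/forallP => v; rewrite in_setT.
- move=> x y [S [hS <-]] [S' [hS' <-]].
  idtac.
  case: (leqP #|S| #|S'|) => h.
    by exists S; split=> //; apply/esym/minn_idPl.
  by exists S'; split=> //; apply/esym/minn_idPr; exact: ltnW.
- by move=> S hS; exists S.
Qed.

Lemma card_pairs (T1 T2 : finType) (A : {set T1 * T2}) :
  #|A| = \sum_g #|[set h | (g, h) \in A]|.
Proof.
have -> : #|A| = \sum_(x in A) 1 by rewrite sum1_card.
rewrite big_mkcond /=.
have E : forall g, #|[set h | (g, h) \in A]| = \sum_h (if (g, h) \in A then 1 else 0).
  move=> g; rewrite -sum1dep_card big_mkcond /=; done.
rewrite (eq_bigr _ (fun g _ => E g)).
rewrite pair_bigA /=.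
by apply: eq_bigr => [[g h]] _.
Qed.

Lemma cardU_le (T : finType) (A B : {set T}) : #|A :|: B| <= #|A| + #|B|.
Proof. by rewrite cardsU leq_subr. Qed.
Lemma lower (TG TH : finType) (eG : rel TG) (eH : rel TH) f S :
  simple_graph eG -> dominating (sierpinski_rel eG eH f) S ->
  #|TG| * domination_number eH <= #|S| + num_edges eG.
Proof.
case=> symG irrG hS.
set P := [set p : TG * TG | [&& eG p.1 p.2, (p.2, f p.1) \in S & (p.1, f p.2) \notin S]].
have hP : #|P| <= num_edges eG.
  have inj : {in P &, injective (fun p : TG * TG => [set p.1; p.2])}.
    move=> [a b] [c d]; rewrite !inE /= => /and3P[ab s1 n1] /and3P[cd s2 n2] eq.
    have ha : a \in [set c; d] by rewrite -eq set21.
    have hb : b \in [set c; d] by rewrite -eq set22.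
    move: ha hb; rewrite !inE => /orP[/eqP ac|/eqP ad] /orP[/eqP bc|/eqP bd]; subst.
    - by rewrite irrG in ab.
    - by [].
    - by rewrite s2 in n1.
    - by rewrite irrG in ab.
  rewrite /num_edges -(card_in_imset inj).
  apply: subset_leq_card; apply/subsetP => E /imsetP [[a b]].
  rewrite inE => /and3P[ab _ _] ->; rewrite inE.
  by apply/existsP; exists a; apply/existsP; exists b; rewrite ab eqxx.
have hg : forall g, domination_number eH
    <= #|[set h | (g, h) \in S]| + #|[set g' | (g, g') \in P]|.
  move=> g; set Sg := [set h | (g, h) \in S]; set Pg := [set g' | (g, g') \in P].
  apply: leq_trans (dom_le (S := Sg :|: f @: Pg) _) _.
  - apply/forallP => h.
    move/forallP: hS => /(_ (g, h)) /orP [inS | /existsP [[u1 u2]] /andP [uS]].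
      by rewrite !inE inS.
    rewrite /sierpinski_rel /= => /orP [/andP [/eqP u1g e12] | /and3P [eu /eqP hf /eqP u2f]].
      subst u1; apply/orP; right; apply/existsP; exists u2.
      by rewrite e12 !inE uS.
    subst h u2; case: (boolP ((g, f u1) \in S)) => hin.
      by rewrite !inE hin.
    apply/orP; left; rewrite in_setU; apply/orP; right; apply/imsetP; exists u1 => //.
    by rewrite !inE /= symG eu uS hin.
  - by apply: leq_trans (cardU_le _ _) _; rewrite leq_add2l leq_imset_card.
have H : \sum_(g : TG) domination_number eH <= \sum_(g : TG)
    (#|[set h | (g, h) \in S]| + #|[set g' | (g, g') \in P]|).
  by apply: leq_sum => g _; exact: hg.
move: H; rewrite big_split /= -!card_pairs sum_nat_const.
by move=> H; apply: leq_trans H _; rewrite leq_add2l.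
Qed.

Theorem theorem2p1 (TG TH : finType) (eG : rel TG) (eH : rel TH) :
  simple_graph eG -> simple_graph eH -> 0 < #|TH| ->
  [/\ #|TG| * domination_number eH - num_edges eG
        <= sierpinski_domination eG eH,
      sierpinski_domination eG eH <= upper_sierpinski_domination eG eH
    & upper_sierpinski_domination eG eH <= #|TG| * domination_number eH].
Proof.
move=> hG hH /card_gt0P [h0 _].
have [D [hD cD]] := dom_ex eH.
have dnle : domination_number eH <= #|TH| by rewrite -cD max_card.
split.
- rewrite leq_subLR /sierpinski_domination.
  apply: (big_ind (fun n => #|TG| * domination_number eH <= num_edges eG + n)).
  + by apply: leq_trans (leq_addl _ _); rewrite leq_mul2l dnle orbT.
  + by move=> x y hx hy; rewrite /minn; case: ifP.
  + move=> f _; have [S [hS <-]] := dom_ex (sierpinski_rel eG eH f).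
    by rewrite addnC; apply: (lower hG hS).
- rewrite /sierpinski_domination /upper_sierpinski_domination.
  apply: (@leq_trans (domination_number (sierpinski_rel eG eH [ffun _ => h0]))).
    exact: bigmin_le.
  exact: leq_bigmax.
- apply/bigmax_leqP => f _.
  set S := setX [set: TG] D.
  apply: leq_trans (dom_le (S := S) _) _; last by rewrite cardsX cardsT cD.
  apply/forallP => -[g h]; move/forallP: hD => /(_ h) /orP [hin | /existsP [u /andP [uD euh]]].
    by rewrite !inE hin.
  apply/orP; right; apply/existsP; exists (g, u).
  by rewrite !inE uD /sierpinski_rel /= eqxx euh.
Qed.
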